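(* Under the setting and hypotheses of the convergence theorem stated in the context (existence of a valid solution $\boldsymbol{x}^\star$ and priors satisfying $1\ge q_v>1-\epsilon_v$ if $\mathtt{x}^\star_v=0$, $0\le q_v<\epsilon_v$ if $\mathtt{x}^\star_v=1$), the variable-to-factor messages after the first BP iteration satisfy $$\mathsf{m}^{(1)}_{v\to J}(\mathtt{x}^\star_v)>\mathsf{m}^{(1)}_{v\to J}(1-\mathtt{x}^\star_v)\quad\text{for all } v\in\mathcal{V},\ J\in\mathcal{J}_v.$$
   Context: Factor graph: a finite set $\mathcal{V}$ of binary variables $x_v\in\{0,1\}$ and a finite set $\mathcal{J}$ of factors; each factor $J$ has a nonempty neighborhood $\mathcal{V}_J\subseteq\mathcal{V}$ and a function $\mathsf{g}_J:\{0,1\}^{|\mathcal{V}_J|}\to\{0,1\}$. For $v\in\mathcal{V}$, $\mathcal{J}_v=\{J: v\in\mathcal{V}_J\}$, assumed nonempty. A valid solution is $\boldsymbol{x}^\star\in\{0,1\}^{\mathcal{V}}$ with $\mathsf{g}_J(\boldsymbol{x}^\star_{\mathcal{V}_J})=1$ for all $J$. Define $\kappa_v=\max_{J\in\mathcal{J}_v}|\{\mathbf{x}_{\mathcal{V}_J}:\mathsf{g}_J(\mathbf{x}_{\mathcal{V}_J})=1\}|$ and $\epsilon_v=1/(1+\kappa_v^{|\mathcal{J}_v|})$. BP: priors $\mathrm{P}_v(0)=q_v$, $\mathrm{P}_v(1)=1-q_v$; $\mathsf{m}^{(0)}_{v\to J}(0)=q_v$, $\mathsf{m}^{(0)}_{v\to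 J}(1)=1-q_v$; for $n\ge1$, $\mathsf{m}^{(n)}_{J\to v}(x)=\mathtt{C}^{(n)}_{J\to v}\sum_{\mathbf{x}_{\mathcal{V}_J\setminus v}}\mathsf{g}_J(\mathbf{x}_{\mathcal{V}_J\setminus v},x_v=x)\prod_{y\in\mathcal{V}_J\setminus v}\mathsf{m}^{(n-1)}_{y\to J}(x_y)$ and $\mathsf{m}^{(n)}_{v\to J}(x)=\mathtt{C}^{(n)}_{v\to J}\mathrm{P}_v(x)\prod_{I\in\mathcal{J}_v\setminus J}\mathsf{m}^{(n)}_{I\to v}(x)$, with positive normalizing constants making $\mathsf{m}(0)+\mathsf{m}(1)=1$. *)

(* Defs.v *)
From HB Require Import structures.
From mathcomp Require Import all_boot all_order all_algebra.
Set Implicit Arguments. Unset Strict Implicit. Unset Printing Implicit Defensive.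
Import Order.TTheory GRing.Theory Num.Theory.
Local Open Scope ring_scope.

(* Factor graph: variables V (finType), factors F (finType),
   neighbourhood N J : {set V} (= V_J), local constraint
   g J : {0,1}^{V_J} -> {0,1}, encoded as a boolean function on
   finite functions from the subtype {u | u \in N J} to bool. *)
Definition local (V F : finType) (N : F -> {set V}) (J : F) : finType :=
  {ffun {u : V | u \in N J} -> bool}.

Definition restr (V F : finType) (N : F -> {set V}) (J : F) (x : V -> bool)
  : local N J := [ffun u => x (val u)].

(* prior P_v, also the initial message m^(0)_{v->J} *)
Definition prior (R : realFieldType) (V : finType) (q : V -> R) (v : V) (b : bool) : R :=
  if b then 1 - q v else q v.

Definition normalize (R : realFieldType) (f : bool -> R) (b : bool) : R :=
  f b / (f false + f true).

Definition msgFV1 (R : realFieldType) (V F : finType) (N : F -> {set V})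
  (g : forall J : F, local N J -> bool) (q : V -> R) (J : F) (v : V) : bool -> R :=
  normalize (fun b =>
    \sum_(y : local N J | [forall u, (val u == v) ==> (y u == b)])
       ((g J y)%:R * \prod_(u : {u : V | u \in N J} | val u != v) prior q (val u) (y u))).

Definition msgVF1 (R : realFieldType) (V F : finType) (N : F -> {set V})
  (g : forall J : F, local N J -> bool) (q : V -> R) (v : V) (J : F) : bool -> R :=
  normalize (fun b =>
    prior q v b * \prod_(I : F | (v \in N I) && (I != J)) msgFV1 g q I v b).

Definition kappa (V F : finType) (N : F -> {set V})
  (g : forall J : F, local N J -> bool) (v : V) : nat :=
  \max_(J : F | v \in N J) #|[set y : local N J | g J y]|.

Definition eps (R : realFieldType) (V F : finType) (N : F -> {set V})
  (g : forall J : F, local N J -> bool) (v : V) : R :=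
  1 / (1 + (kappa g v)%:R ^+ #|[set J : F | v \in N J]|).

(* Main.v *)
Require Import Defs.
From HB Require Import structures.
From mathcomp Require Import all_boot all_order all_algebra.
From mathcomp Require Import ring lra.
Import Order.TTheory GRing.Theory Num.Theory.
Local Open Scope ring_scope.

Lemma normalize_bound (R : realFieldType) (f : bool -> R) (x : bool) (k : R) :
  0 <= k -> 0 <= f (~~ x) -> 0 < f x -> f (~~ x) <= k * f x ->
  [/\ 0 <= normalize f (~~ x), 0 < normalize f x &
      normalize f (~~ x) <= k * normalize f x].
Proof.
move=> k0 fn fx fle; rewrite /normalize.
have D : 0 < f false + f true by case: x fn fx fle => /= ? ? _; [rewrite addrC|];
  apply: ltr_wpDr.
split.
- by apply: divr_ge0 => //; apply: ltW.
- by apply: divr_gt0.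
- by rewrite mulrA; apply: ler_wpM2r => //; rewrite invr_ge0 ltW.
Qed.

Lemma normalize_lt (R : realFieldType) (f : bool -> R) (x : bool) :
  0 <= f (~~ x) -> f (~~ x) < f x -> normalize f (~~ x) < normalize f x.
Proof.
move=> fn flt; rewrite /normalize.
have D : 0 < f false + f true by case: x fn flt => /= ? ?; lra.
by rewrite ltr_pM2r // invr_gt0.
Qed.

Theorem lemma2 (R : realFieldType) (V F : finType) (N : F -> {set V})
  (g : forall J : F, local N J -> bool) (q : V -> R) (xstar : V -> bool)
  (hN : forall J : F, N J != set0)
  (hJ : forall v : V, [set J : F | v \in N J] != set0)
  (hvalid : forall J : F, g J (restr N J xstar))
  (hq0 : forall v : V, xstar v = false -> 1 - eps R g v < q v /\ q v <= 1)
  (hq1 : forall v : V, xstar v = true -> 0 <= q v /\ q v < eps R g v) :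
  forall (v : V) (J : F), v \in N J ->
    msgVF1 g q v J (~~ xstar v) < msgVF1 g q v J (xstar v).
Proof.
have cardk : forall u I, u \in N I -> (#|[set y | g I y]| <= kappa g u)%N.
  by move=> u I uI; rewrite /kappa; exact: (@leq_bigmax_cond F (fun I => u \in N I) (fun I => #|[set y | g I y]|) I uI).
have k1 : forall u I, u \in N I -> (1 <= kappa g u)%N.
  move=> u I uI; apply: leq_trans (cardk u I uI).
  by rewrite card_gt0; apply/set0Pn; exists (restr N I xstar); rewrite inE.
have epsK : forall u, 0 < eps R g u /\ eps R g u * (kappa g u)%:R ^+ #|[set J : F | u \in N J]| = 1 - eps R g u
    /\ 1 <= (kappa g u)%:R ^+ #|[set J : F | u \in N J]| :> R.
  move=> u; have /set0Pn [I] := hJ u; rewrite inE => uI.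
  have K1 : 1 <= (kappa g u)%:R ^+ #|[set J : F | u \in N J]| :> R.
    by apply: exprn_ege1; rewrite ler1n; apply: k1 uI.
  have K0 : 0 < 1 + (kappa g u)%:R ^+ #|[set J : F | u \in N J]| :> R.
    by apply: ltr_wpDr => //; apply: le_trans K1.
  rewrite /eps; split; last split => //.
    by rewrite mul1r invr_gt0.
  move: K0; set K := _ ^+ _ => K0.
  clearbody K.
  field.
  by rewrite gt_eqF.
have pr : forall u, [/\ forall b, 0 <= prior q u b, 1 - eps R g u < prior q u (xstar u),
    prior q u (~~ xstar u) < eps R g u & forall b, prior q u b <= prior q u (xstar u)].
  move=> u; have [e0 [eK K1]] := epsK u.
  have ehalf : eps R g u <= 1 - eps R g u.
    by rewrite -eK; apply: ler_peMr => //; apply: ltW.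
  have e1 : eps R g u <= 1 by apply: le_trans ehalf _; rewrite lerBlDr lerDl ltW.
  rewrite /prior; case E: (xstar u) => /=.
  - have [h0 h1] := hq1 u E.
    split; [by case; lra | lra | lra | by case; lra].
  - have [h0 h1] := hq0 u E.
    split; [by case; lra | lra | lra | by case; lra].
move=> v J vJ.
set x := xstar v.
set k : R := (kappa g v)%:R.
have k0 : 0 <= k by rewrite ler0n.
have fac : forall I, v \in N I ->
  [/\ 0 <= msgFV1 g q I v (~~ x), 0 < msgFV1 g q I v x &
      msgFV1 g q I v (~~ x) <= k * msgFV1 g q I v x].
  move=> I vI.
  set P := \prod_(u : {u : V | u \in N I} | val u != v) prior q (val u) (xstar (val u)).
  have P0 : 0 < P.
    apply: prodr_gt0 => u _; have [_ h _ _] := pr (val u).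
    have [e0 [eK K1]] := epsK (val u).
    have : eps R g (val u) <= 1 - eps R g (val u) by rewrite -eK; apply: ler_peMr => //; apply: ltW.
    move=> ?; lra.
  have fxP : P <= (\sum_(y : local N I | [forall u, (val u == v) ==> (y u == x)])
     ((g I y)%:R * \prod_(u : {u : V | u \in N I} | val u != v) prior q (val u) (y u))).
    have y0c : [forall u, (val u == v) ==> (restr N I xstar u == x)].
      by apply/forallP => u; apply/implyP => /eqP uv; rewrite /restr ffunE uv.
    rewrite (bigD1 _ y0c) /= hvalid mul1r.
    rewrite -[X in X <= _]addr0; apply: lerD.
      rewrite /P (eq_bigr (fun u => prior q (val u) (restr N I xstar u))) // => u _.
      by rewrite /restr ffunE.
    apply: sumr_ge0 => y _; apply: mulr_ge0; first by rewrite ler0n.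
    by apply: prodr_ge0 => u _; have [? _ _ _] := pr (val u).
  rewrite /msgFV1; apply: normalize_bound => //.
  - apply: sumr_ge0 => y _; apply: mulr_ge0; first by rewrite ler0n.
    by apply: prodr_ge0 => u _; have [? _ _ _] := pr (val u).
  - exact: lt_le_trans P0 fxP.
  apply: le_trans (ler_wpM2l k0 fxP).
  apply: (@le_trans _ _ (\sum_(y : local N I | [forall u, (val u == v) ==> (y u == ~~ x)]) (g I y)%:R * P)).
    apply: ler_sum => y _; apply: ler_wpM2l; first by rewrite ler0n.
    by apply: ler_prod => u _; have [? _ _ ?] := pr (val u); apply/andP.
  apply: (@le_trans _ _ (\sum_(y : local N I) (g I y)%:R * P)).
    rewrite [X in X <= _]big_mkcond /=; apply: ler_sum => y _; case: ifP => // _.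
    apply: mulr_ge0; first by rewrite ler0n.
    by apply: ltW.
  have hs : \sum_(y : local N I) ((g I y)%:R : R) = #|[set y | g I y]|%:R.
    rewrite -sum1_card natr_sum [RHS]big_mkcond /=; apply: eq_bigr => i _.
    by rewrite inE; case: (g I i).
  rewrite -mulr_suml hs ler_pM2r //.
  by rewrite ler_nat; apply: cardk vI.
rewrite /msgVF1; apply: normalize_lt.
  apply: mulr_ge0; first by have [? _ _ _] := pr v.
  by apply: prodr_ge0 => I /andP [vI _]; have [? _ _] := fac I vI.
set Px := \prod_(I | (v \in N I) && (I != J)) msgFV1 g q I v x.
have Px0 : 0 < Px by apply: prodr_gt0 => I /andP [vI _]; have [_ ? _] := fac I vI.
have [e0 [eK K1]] := epsK v.
set K := k ^+ #|[set J0 : F | v \in N J0]|.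
have hP : \prod_(I | (v \in N I) && (I != J)) msgFV1 g q I v (~~ x) <= K * Px.
  apply: (@le_trans _ _ (\prod_(I | (v \in N I) && (I != J)) (k * msgFV1 g q I v x))).
    by apply: ler_prod => I /andP [vI _]; have [? _ ?] := fac I vI; apply/andP.
  rewrite big_split /=; apply: ler_wpM2r; first exact: ltW.
  have -> : \prod_(I | (v \in N I) && (I != J)) k = k ^+ #|[set I | (v \in N I) && (I != J)]|.
    by rewrite -prodr_const; apply: eq_bigl => I; rewrite inE.
  apply: ler_weXn2l; first by rewrite ler1n; apply: k1 vJ.
  by apply: subset_leq_card; apply/subsetP => I; rewrite !inE => /andP [].
have [pn px plx _] := pr v.
rewrite -/x in px plx.
apply: (@le_lt_trans _ _ (prior q v (~~ x) * (K * Px))).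
  by apply: ler_wpM2l.
rewrite mulrA ltr_pM2r //.
have : prior q v (~~ x) * K <= eps R g v * K by apply: ler_wpM2r => //; [apply: le_trans K1 | apply: ltW].
rewrite eK.
lra.
Qed.
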